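(* Let $R$ be a commutative ring with identity. Then $R$ is almost complemented and roughly reduced if and only if $R$ is roughly complemented.
   Context: $\mathfrak{N}(R)$ is the nilradical, $\mathrm{reg}(R)$ the regular elements, $\mathrm{areg}(R)=\{x: x+\mathfrak{N}(R)\in\mathrm{reg}(R/\mathfrak{N}(R))\}$ (equivalently $xa\in\mathfrak{N}(R)\Rightarrow a\in\mathfrak{N}(R)$). $R$ is almost complemented if $R/\mathfrak{N}(R)$ is complemented, i.e. for each $\bar a$ there is $\bar b$ with $\bar a\bar b=0$ and $\bar a+\bar b$ regular in $R/\mathfrak{N}(R)$. Let $\eta(R)=\bigcup_{s\in\mathrm{areg}(R)}\mathrm{Ann}(s)$; $R$ is roughly reduced if $\eta(R)=\mathfrak{N}(R)$. An element $a$ is roughly complemented if there is $b$ with $ab=0$ and $a+b\in\mathrm{areg}(R)$; $R$ is roughly complemented if every element is. *)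

(* Defs.v *)
From mathcomp Require Import all_boot all_algebra.
Set Implicit Arguments. Unset Strict Implicit. Unset Printing Implicit Defensive.
Import GRing.Theory.
Local Open Scope ring_scope.

Section Defs.
Variable R : comPzRingType.

Definition in_nilrad (x : R) : Prop := exists n : nat, x ^+ n = 0.

(* x + N(R) is regular (a non-zero-divisor) in R/N(R), unfolded:
   (x+N)(a+N) = 0 in R/N  implies  a+N = 0 in R/N *)
Definition areg (x : R) : Prop := forall a : R, in_nilrad (x * a) -> in_nilrad a.

(* R/N(R) complemented, unfolded on representatives *)
Definition almost_complemented : Prop :=
  forall a : R, exists b : R, in_nilrad (a * b) /\ areg (a + b).

Definition ann (s : R) (x : R) : Prop := s * x = 0.

Definition in_eta (x : R) : Prop := exists s : R, areg s /\ ann s x.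

Definition roughly_reduced : Prop := forall x : R, in_eta x <-> in_nilrad x.

Definition roughly_complemented_elt (a : R) : Prop :=
  exists b : R, a * b = 0 /\ areg (a + b).

Definition roughly_complemented : Prop :=
  forall a : R, roughly_complemented_elt a.
End Defs.

(* Main.v *)
Require Import Defs.
From mathcomp Require Import all_boot all_algebra.
From mathcomp Require Import ring.
Import GRing.Theory.
Local Open Scope ring_scope.

Section Aux.
Variable R : comPzRingType.
Implicit Types x y : R.

Lemma nilM x y : in_nilrad x -> in_nilrad (x * y).
Proof. by move=> [n hn]; exists n; rewrite exprMn hn mul0r. Qed.

Lemma nilMl x y : in_nilrad y -> in_nilrad (x * y).
Proof. by rewrite mulrC; apply: nilM. Qed.

Lemma nilD x y : in_nilrad x -> in_nilrad y -> in_nilrad (x + y).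
Proof.
move=> [m hm] [n hn]; exists (m + n)%N; rewrite exprDn big1 // => i _.
case: (ltnP i n) => hi.
  have -> : (m + n - i = m + (n - i))%N by rewrite addnBA // ltnW.
  by rewrite exprD hm !mul0r mul0rn.
by rewrite -(subnK hi) exprD hn mulr0 mulr0 mul0rn.
Qed.

Lemma nilN x : in_nilrad x -> in_nilrad (- x).
Proof. by move=> h; rewrite -mulN1r; apply: nilMl. Qed.

Lemma nilB x y : in_nilrad (x + y) -> in_nilrad y -> in_nilrad x.
Proof. by move=> h1 h2; rewrite -(addrK y x); apply: nilD => //; apply: nilN. Qed.

Lemma nilsq x : in_nilrad (x * x) -> in_nilrad x.
Proof. by move=> [n hn]; exists (2 * n)%N; rewrite exprM expr2. Qed.

Lemma nil0 : in_nilrad (0 : R).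
Proof. by exists 1%N; rewrite expr1. Qed.
End Aux.

Theorem mainTheorem16 (R : comPzRingType) :
  (almost_complemented R /\ roughly_reduced R) <-> roughly_complemented R.
Proof.
split.
  move=> [hac hrr] a.
  have [b [hab hreg]] := hac a.
  have [s [hs hsab]] := (hrr (a * b)).2 hab.
  exists (s * b); split.
    by rewrite mulrCA; exact: hsab.
  move=> x hx.
  have hn : in_nilrad (s * (a * b) * x) by apply: nilM; apply: nilMl.
  have hax : in_nilrad (a * x).
    apply: nilsq.
    have h1 : in_nilrad (a * a * x + s * (a * b) * x).
      have -> : a * a * x + s * (a * b) * x = a * ((a + s * b) * x) by ring.
      by apply: nilMl.
    have h2 := @nilB R _ _ h1 hn.
    have -> : a * x * (a * x) = a * a * x * x by ring.
    by apply: nilM.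
  have hbx : in_nilrad (b * x).
    apply: nilsq.
    have h1 : in_nilrad (s * (b * b * x) + a * b * x).
      have -> : s * (b * b * x) + a * b * x = b * ((a + s * b) * x) by ring.
      by apply: nilMl.
    have h2 := hs _ (@nilB R _ _ h1 (@nilM R _ x hab)).
    have -> : b * x * (b * x) = b * b * x * x by ring.
    by apply: nilM.
  by apply: hreg; rewrite mulrDl; apply: nilD.
move=> hrc; split.
  move=> a; have [b [h1 h2]] := hrc a; exists b; split => //.
  by rewrite h1; apply: nil0.
move=> x; split.
  by move=> [s [hs hsx]]; apply: hs; rewrite /ann in hsx; rewrite hsx; apply: nil0.
move=> hx; have [b [hxb hreg]] := hrc x; exists b; split; last by rewrite /ann mulrC.
move=> y hy; apply: hreg; rewrite mulrDl; apply: nilD => //; exact: nilM.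
Qed.
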